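(* Let $\mathcal{F}$ be a frame, let $C_{cut}$ be an undirected cut between $C_s$ and $C_o$ (all subsets of $\mathcal{CH}$), and let $\mathcal{B}_o\in\mathrm{lruns}_{C_o}$. Then $$J_{C_o}^{C_s}(\mathcal{B}_o)=\bigcup_{\mathcal{B}_c\in J_{C_o}^{C_{cut}}(\mathcal{B}_o)} J_{C_{cut}}^{C_s}(\mathcal{B}_c).$$
   Context: A frame $\mathcal{F}$ consists of pairwise disjoint sets $\mathcal{LO}$ (locations), $\mathcal{CH}$ (channels), $\mathcal{D}$ (data). Each channel $c$ either has both a sender $\mathrm{sender}(c)$ and recipient $\mathrm{recipient}(c)$ in $\mathcal{LO}$ (possibly equal), or neither; $\mathrm{chans}(\ell)=\{c:\mathrm{sender}(c)=\ell\text{ or }\mathrm{recipient}(c)=\ell\}$. Each location $\ell$ has a prefix-closed set $\mathrm{traces}(\ell)$ of finite or infinite sequences of labels $(c,v)$, $c\in\mathrm{chans}(\ell)$, $v\in\mathcal{D}$. Events come from a set $E$ with $\mathrm{chan}:E\to\mathcal{CH}$, $\mathrm{msg}:E\to\mathcal{D}$. A system of events $(B,\preceq)$ has $B\subseteq E$, $\preceq$ a partial order with finitely many predecessors per event; it is an execution ($\in\mathrm{exec}(\mathcal{F})$) iff for each location $\ell$ the events whose channel has $\ell$ as sender or recipient are linearly ordered and, as a sequence of labels $(\mathrm{chan}(e),\mathrm{msg}(e))$, lie in $\mathrm{traces}(\ell)$. $\mathcal{B}|_C$ keeps events with channel in $C$ with the restricted order; $\mathrm{lruns}_C=\{\mathcal{A}|_C:\mathcal{A}\in\mathrm{exec}(\mathcal{F})\}$;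 $J_C^{C'}(\mathcal{B})=\{\mathcal{A}|_{C'}:\mathcal{A}\in\mathrm{exec}(\mathcal{F}),\mathcal{A}|_C=\mathcal{B}\}$. An undirected path is a sequence of locations $\ell_0,\dots,\ell_n$ with channels $c_1,\dots,c_n$, each $c_k$ having endpoints $\ell_{k-1},\ell_k$ in some direction (the path traverses the $c_k$). $C_{cut}$ is an undirected cut between $C_s$ and $C_o$ iff $C_s,C_{cut},C_o$ are pairwise disjoint and every undirected path from an endpoint location of a channel in $C_o$ to an endpoint location of a channel in $C_s$ traverses some channel in $C_{cut}$. *)

(* Defs.v *)
From Stdlib Require Import List.
Import ListNotations.
Set Implicit Arguments.

(* A (finite or infinite) sequence: a function nat -> option X that, once it
   returns None, returns None forever.  Finite sequences end with None. *)
Definition is_seq {X : Type} (t : nat -> option X) : Prop :=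
  forall n, t n = None -> t (S n) = None.

Definition truncate {X : Type} (t : nat -> option X) (n : nat) : nat -> option X :=
  fun k => if Nat.ltb k n then t k else None.

(* The three sets LO, CH, D are separate types (hence pairwise
   disjoint).  [endpoints c = Some (s, r)] means sender(c) = s and
   recipient(c) = r; [None] means c has neither a sender nor a recipient. *)
Record frame := {
  LO : Type;
  CH : Type;
  D  : Type;
  endpoints : CH -> option (LO * LO);
  traces : LO -> (nat -> option (CH * D)) -> Prop;
  traces_seq : forall l t, traces l t -> is_seq t;
  traces_chans : forall l t n c v, traces l t -> t n = Some (c, v) ->
      exists s r, endpoints c = Some (s, r) /\ (s = l \/ r = l);
  traces_prefix : forall l t n, traces l t -> traces l (truncate t n);
  E : Type;
  chan : E -> CH;
  msg : E -> D
}.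

Section Sys.
Variable F : frame.

Definition sender_of (c : CH F) (l : LO F) : Prop :=
  exists r, endpoints F c = Some (l, r).
Definition recipient_of (c : CH F) (l : LO F) : Prop :=
  exists s, endpoints F c = Some (s, l).
Definition at_loc (c : CH F) (l : LO F) : Prop := sender_of c l \/ recipient_of c l.

(* A candidate system of events: a subset B of E and a relation on E
   (only its restriction to B is relevant). *)
Record sysev := { mem : E F -> Prop; le : E F -> E F -> Prop }.

Definition is_system (B : sysev) : Prop :=
  (forall e, mem B e -> le B e e) /\
  (forall e1 e2, mem B e1 -> mem B e2 -> le B e1 e2 -> le B e2 e1 -> e1 = e2) /\
  (forall e1 e2 e3, mem B e1 -> mem B e2 -> mem B e3 ->
      le B e1 e2 -> le B e2 e3 -> le B e1 e3) /\
  (forall e, mem B e -> exists l : list (E F),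
      forall e', mem B e' -> le B e' e -> In e' l).

Definition sys_eq (A B : sysev) : Prop :=
  (forall e, mem A e <-> mem B e) /\
  (forall e1 e2, mem A e1 -> mem A e2 -> (le A e1 e2 <-> le B e1 e2)).

Definition label (e : E F) : CH F * D F := (chan F e, msg F e).

Definition loc_ev (B : sysev) (l : LO F) (e : E F) : Prop :=
  mem B e /\ at_loc (chan F e) l.

(* The order-listing is an enumeration f : nat -> option E of the events at
   l, strictly increasing and exhaustive. *)
Definition is_exec (B : sysev) : Prop :=
  is_system B /\
  forall l : LO F,
    (forall e1 e2, loc_ev B l e1 -> loc_ev B l e2 -> le B e1 e2 \/ le B e2 e1) /\
    exists (f : nat -> option (E F)) (t : nat -> option (CH F * D F)),
      is_seq f /\
      (forall n e, f n = Some e -> loc_ev B l e) /\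
      (forall e, loc_ev B l e -> exists n, f n = Some e) /\
      (forall i j e1 e2, i < j -> f i = Some e1 -> f j = Some e2 ->
          le B e1 e2 /\ e1 <> e2) /\
      traces F l t /\
      (forall n, t n = option_map label (f n)).

Definition restrict (C : CH F -> Prop) (B : sysev) : sysev :=
  {| mem := fun e => mem B e /\ C (chan F e);
     le := fun e1 e2 => (mem B e1 /\ C (chan F e1)) /\
                        (mem B e2 /\ C (chan F e2)) /\ le B e1 e2 |}.

Definition lruns (C : CH F -> Prop) (B : sysev) : Prop :=
  exists A, is_exec A /\ sys_eq (restrict C A) B.

Definition J (C C' : CH F -> Prop) (B X : sysev) : Prop :=
  exists A, is_exec A /\ sys_eq (restrict C A) B /\ sys_eq (restrict C' A) X.

Inductive upath : LO F -> list (CH F) -> LO F -> Prop :=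
| upath_nil : forall l, upath l [] l
| upath_cons : forall l m l' c cs,
    ((endpoints F c = Some (l, m)) \/ (endpoints F c = Some (m, l))) ->
    upath m cs l' -> upath l (c :: cs) l'.

Definition undirected_cut (Cs Ccut Co : CH F -> Prop) : Prop :=
  (forall c, ~ (Cs c /\ Ccut c)) /\
  (forall c, ~ (Cs c /\ Co c)) /\
  (forall c, ~ (Ccut c /\ Co c)) /\
  (forall co cs l0 ln p, Co co -> Cs cs -> at_loc co l0 -> at_loc cs ln ->
      upath l0 p ln -> exists c, In c p /\ Ccut c).

End Sys.
Arguments undirected_cut : clear implicits.
Arguments lruns : clear implicits.
Arguments J : clear implicits.

(* Main.v *)
Require Import Defs.
From Stdlib Require Import List Classical.
Import ListNotations.
Unset Implicit Arguments.

Lemma upath_snoc (F : frame) a p b c d :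
  upath F a p b ->
  (endpoints F c = Some (b, d) \/ endpoints F c = Some (d, b)) ->
  upath F a (p ++ [c]) d.
Proof.
  intros Hp He; induction Hp; simpl.
  - econstructor; [exact He| constructor].
  - econstructor; [exact H| auto].
Qed.

Lemma sys_eq_refl (F : frame) (A : sysev F) : sys_eq A A.
Proof. split; intros; tauto. Qed.

Lemma sys_eq_sym (F : frame) (A B : sysev F) : sys_eq A B -> sys_eq B A.
Proof.
  intros [H1 H2]; split; intros.
  - symmetry; apply H1.
  - symmetry; apply H2; apply H1; auto.
Qed.

Lemma sys_eq_trans (F : frame) (A B C : sysev F) : sys_eq A B -> sys_eq B C -> sys_eq A C.
Proof.
  intros [H1 H2] [H3 H4]; split; intros.
  - rewrite H1; apply H3.
  - rewrite H2 by auto. apply H4; apply H1; auto.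
Qed.

Ltac sp := match goal with |- _ /\ _ => split; [|sp] | _ => idtac end.

Section Glue.
Variable F : frame.
Variables Cs Ccut Co : CH F -> Prop.
Variables A1 A2 : sysev F.
Hypothesis cut : undirected_cut F Cs Ccut Co.
Hypothesis ex1 : is_exec A1.
Hypothesis ex2 : is_exec A2.
Hypothesis Kmem : forall e, Ccut (chan F e) -> (mem A1 e <-> mem A2 e).
Hypothesis Kle : forall e1 e2, Ccut (chan F e1) -> Ccut (chan F e2) ->
   mem A1 e1 -> mem A1 e2 -> (le A1 e1 e2 <-> le A2 e1 e2).

Definition Lo (l : LO F) : Prop := exists co l0 p, Co co /\ at_loc F co l0 /\
   upath F l0 p l /\ (forall c, In c p -> ~ Ccut c).
Definition touches c := exists l, at_loc F c l /\ Lo l.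
Definition side1 c := Ccut c \/ (~Ccut c /\ (Co c \/ touches c)).
Definition side2 c := Ccut c \/ (~Ccut c /\ ~Co c /\ ~touches c).
Definition S1 e := side1 (chan F e) /\ mem A1 e.
Definition S2 e := side2 (chan F e) /\ mem A2 e.
Definition Kc e := Ccut (chan F e) /\ mem A1 e /\ mem A2 e.
Definition leA x y := (S1 x /\ S1 y /\ le A1 x y) \/ (S2 x /\ S2 y /\ le A2 x y) \/
  (exists c, Kc c /\ S1 x /\ S2 y /\ le A1 x c /\ le A2 c y) \/
  (exists c, Kc c /\ S2 x /\ S1 y /\ le A2 x c /\ le A1 c y).
Definition Aglue : sysev F := {| mem := fun e => S1 e \/ S2 e; le := leA |}.

Lemma S12K e : S1 e -> S2 e -> Kc e.
Proof.
  unfold S1, S2, side1, side2, Kc; intros [[H|H] M1] [[H'|H'] M2]; tauto.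
Qed.
Lemma KS1 e : Kc e -> S1 e.
Proof. unfold Kc, S1, side1; tauto. Qed.
Lemma KS2 e : Kc e -> S2 e.
Proof. unfold Kc, S2, side2; tauto. Qed.
Lemma KK c d : Kc c -> Kc d -> (le A1 c d <-> le A2 c d).
Proof. intros [? [? ?]] [? [? ?]]; apply Kle; auto. Qed.

Let sys1 := proj1 ex1.
Let sys2 := proj1 ex2.
Lemma refl1 x : mem A1 x -> le A1 x x. Proof. apply (proj1 sys1). Qed.
Lemma refl2 x : mem A2 x -> le A2 x x. Proof. apply (proj1 sys2). Qed.
Lemma anti1 x y : mem A1 x -> mem A1 y -> le A1 x y -> le A1 y x -> x = y.
Proof. apply (proj1 (proj2 sys1)). Qed.
Lemma anti2 x y : mem A2 x -> mem A2 y -> le A2 x y -> le A2 y x -> x = y.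
Proof. apply (proj1 (proj2 sys2)). Qed.
Lemma trans1 x y z : mem A1 x -> mem A1 y -> mem A1 z -> le A1 x y -> le A1 y z -> le A1 x z.
Proof. apply (proj1 (proj2 (proj2 sys1))). Qed.
Lemma trans2 x y z : mem A2 x -> mem A2 y -> mem A2 z -> le A2 x y -> le A2 y z -> le A2 x z.
Proof. apply (proj1 (proj2 (proj2 sys2))). Qed.
Lemma fin1 e : mem A1 e -> exists l, forall e', mem A1 e' -> le A1 e' e -> In e' l.
Proof. apply (proj2 (proj2 (proj2 sys1))). Qed.
Lemma fin2 e : mem A2 e -> exists l, forall e', mem A2 e' -> le A2 e' e -> In e' l.
Proof. apply (proj2 (proj2 (proj2 sys2))). Qed.

Lemma L11 x y : S1 x -> S1 y -> leA x y -> le A1 x y.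
Proof.
  intros Hx Hy [[_ [_ H]]|[[Hx2 [Hy2 H]]|[[c [Kcc [_ [Hy2 [H1 H2]]]]]|[c [Kcc [Hx2 [_ [H1 H2]]]]]]]].
  - exact H.
  - apply KK; [apply S12K|apply S12K|]; auto.
  - assert (Ky : Kc y) by (apply S12K; auto).
    apply (trans1 x c y); try apply Hx; try apply Kcc; try apply Ky; auto.
    apply KK; auto.
  - assert (Kx : Kc x) by (apply S12K; auto).
    apply (trans1 x c y); try apply Hy; try apply Kcc; try apply Kx; auto.
    apply KK; auto.
Qed.

Lemma L22 x y : S2 x -> S2 y -> leA x y -> le A2 x y.
Proof.
  intros Hx Hy [[Hx1 [Hy1 H]]|[[_ [_ H]]|[[c [Kcc [Hx1 [_ [H1 H2]]]]]|[c [Kcc [_ [Hy1 [H1 H2]]]]]]]].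
  - apply KK; [apply S12K|apply S12K|]; auto.
  - exact H.
  - assert (Kx : Kc x) by (apply S12K; auto).
    apply (trans2 x c y); try apply Hy; try apply Kcc; try apply Kx; auto.
    apply KK; auto.
  - assert (Ky : Kc y) by (apply S12K; auto).
    apply (trans2 x c y); try apply Hx; try apply Kcc; try apply Ky; auto.
    apply KK; auto.
Qed.

Lemma L12 x y : S1 x -> S2 y -> leA x y -> exists c, Kc c /\ le A1 x c /\ le A2 c y.
Proof.
  intros Hx Hy [[_ [Hy1 H]]|[[Hx2 [_ H]]|[[c [Kcc [_ [_ [H1 H2]]]]]|[c [Kcc [Hx2 [Hy1 [H1 H2]]]]]]]].
  - assert (Ky : Kc y) by (apply S12K; auto).
    exists y; sp; auto; apply refl2; apply Hy.
  - assert (Kx : Kc x) by (apply S12K; auto).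
    exists x; sp; auto; apply refl1; apply Hx.
  - exists c; auto.
  - assert (Kx : Kc x) by (apply S12K; auto).
    assert (Ky : Kc y) by (apply S12K; auto).
    exists x; sp; auto. apply refl1; apply Hx.
    apply (trans2 x c y); try apply Hy; try apply Kcc; try apply Kx; auto.
    apply KK; auto.
Qed.

Lemma L21 x y : S2 x -> S1 y -> leA x y -> exists c, Kc c /\ le A2 x c /\ le A1 c y.
Proof.
  intros Hx Hy [[Hx1 [_ H]]|[[_ [Hy2 H]]|[[c [Kcc [Hx1 [Hy2 [H1 H2]]]]]|[c [Kcc [_ [_ [H1 H2]]]]]]]].
  - assert (Kx : Kc x) by (apply S12K; auto).
    exists x; sp; auto; apply refl2; apply Hx.
  - assert (Ky : Kc y) by (apply S12K; auto).
    exists y; sp; auto; apply refl1; apply Hy.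
  - assert (Kx : Kc x) by (apply S12K; auto).
    assert (Ky : Kc y) by (apply S12K; auto).
    exists x; sp; auto. apply refl2; apply Hx.
    apply (trans1 x c y); try apply Hy; try apply Kcc; try apply Kx; auto.
    apply KK; auto.
  - exists c; auto.
Qed.

Lemma glue_system : is_system Aglue.
Proof.
  split; [|split; [|split]]; simpl.
  - intros e [H|H]; unfold leA.
    + left; sp; try apply H; apply refl1, H.
    + right; left; sp; try apply H; apply refl2, H.
  - intros x y [Hx|Hx] [Hy|Hy] H1 H2.
    + apply anti1; try apply Hx; try apply Hy; apply L11; auto.
    + destruct (L12 _ _ Hx Hy H1) as [c [Kcc [Hxc Hcy]]].
      destruct (L21 _ _ Hy Hx H2) as [d [Kd [Hyd Hdx]]].
      assert (Hcd : le A1 c d) by (apply KK; auto; apply (trans2 c y d); try apply Kcc; try apply Kd; try apply Hy; auto).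
      assert (x = c).
      { apply anti1; try apply Hx; try apply Kcc; auto.
        apply (trans1 c d x); try apply Kcc; try apply Kd; try apply Hx; auto. }
      subst c. apply anti2; try apply Kcc; try apply Hy; apply L22; auto; apply KS2; auto.
    + destruct (L21 _ _ Hx Hy H1) as [c [Kcc [Hxc Hcy]]].
      destruct (L12 _ _ Hy Hx H2) as [d [Kd [Hyd Hdx]]].
      assert (Hcd : le A2 c d) by (apply KK; auto; apply (trans1 c y d); try apply Kcc; try apply Kd; try apply Hy; auto).
      assert (x = c).
      { apply anti2; try apply Hx; try apply Kcc; auto.
        apply (trans2 c d x); try apply Kcc; try apply Kd; try apply Hx; auto. }
      subst c. apply anti1; try apply Kcc; try apply Hy; apply L11; auto; apply KS1; auto.
    + apply anti2; try apply Hx; try apply Hy; apply L22; auto.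
  - intros x y z [Hx|Hx] [Hy|Hy] [Hz|Hz] H1 H2; unfold leA.
    + left; sp; auto. apply (trans1 x y z); try apply Hx; try apply Hy; try apply Hz; apply L11; auto.
    + destruct (L12 _ _ Hy Hz H2) as [c [Kcc [A B]]].
      right; right; left; exists c; sp; auto.
      apply (trans1 x y c); try apply Hx; try apply Hy; try apply Kcc; auto; apply L11; auto.
    + destruct (L12 _ _ Hx Hy H1) as [c [Kcc [A B]]].
      destruct (L21 _ _ Hy Hz H2) as [d [Kd [C D]]].
      left; sp; auto.
      assert (le A1 c d) by (apply KK; auto; apply (trans2 c y d); try apply Kcc; try apply Kd; try apply Hy; auto).
      apply (trans1 x c z); try apply Hx; try apply Kcc; try apply Hz; auto.
      apply (trans1 c d z); try apply Kcc; try apply Kd; try apply Hz; auto.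
    + destruct (L12 _ _ Hx Hy H1) as [c [Kcc [A B]]].
      right; right; left; exists c; sp; auto.
      apply (trans2 c y z); try apply Hz; try apply Hy; try apply Kcc; auto; apply L22; auto.
    + destruct (L21 _ _ Hx Hy H1) as [c [Kcc [A B]]].
      right; right; right; exists c; sp; auto.
      apply (trans1 c y z); try apply Hz; try apply Hy; try apply Kcc; auto; apply L11; auto.
    + destruct (L21 _ _ Hx Hy H1) as [c [Kcc [A B]]].
      destruct (L12 _ _ Hy Hz H2) as [d [Kd [C D]]].
      right; left; sp; auto.
      assert (le A2 c d) by (apply KK; auto; apply (trans1 c y d); try apply Kcc; try apply Kd; try apply Hy; auto).
      apply (trans2 x c z); try apply Hx; try apply Kcc; try apply Hz; auto.
      apply (trans2 c d z); try apply Kcc; try apply Kd; try apply Hz; auto.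
    + destruct (L21 _ _ Hy Hz H2) as [c [Kcc [A B]]].
      right; right; right; exists c; sp; auto.
      apply (trans2 x y c); try apply Hx; try apply Hy; try apply Kcc; auto; apply L22; auto.
    + right; left; sp; auto. apply (trans2 x y z); try apply Hx; try apply Hy; try apply Hz; apply L22; auto.
  - intros y Hy.
    assert (E1 : exists l1, S1 y -> forall x, mem A1 x -> le A1 x y -> In x l1).
    { destruct (classic (S1 y)) as [H|H]; [destruct (fin1 y (proj2 H)) as [l Hl]; exists l; auto | exists []; tauto]. }
    assert (E2 : exists l2, S2 y -> forall x, mem A2 x -> le A2 x y -> In x l2).
    { destruct (classic (S2 y)) as [H|H]; [destruct (fin2 y (proj2 H)) as [l Hl]; exists l; auto | exists []; tauto]. }
    destruct E1 as [l1 H1]; destruct E2 as [l2 H2].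
    assert (Hcov : forall (L : list (E F)) (B : sysev F),
       (forall e, mem B e -> exists l, forall e', mem B e' -> le B e' e -> In e' l) ->
       exists L', forall c, In c L -> mem B c -> forall x, mem B x -> le B x c -> In x L').
    { induction L as [|a L IH]; intros B HB.
      - exists []; simpl; tauto.
      - destruct (IH B HB) as [L' HL'].
        destruct (classic (mem B a)) as [Ha|Ha].
        + destruct (HB a Ha) as [la Hla]. exists (la ++ L'); intros c [<-|Hc] Mc x Mx Hx; apply in_or_app; eauto.
        + exists L'; intros c [<-|Hc] Mc x Mx Hx; [tauto|eauto]. }
    destruct (Hcov l2 A1 fin1) as [l3 H3].
    destruct (Hcov l1 A2 fin2) as [l4 H4].
    exists (l1 ++ l2 ++ l3 ++ l4). intros x Mx Hxy.
    repeat rewrite in_app_iff.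
    destruct Mx as [Hx|Hx]; destruct Hy as [Hy|Hy].
    + left; apply H1; auto; [apply Hx| apply L11; auto].
    + destruct (L12 _ _ Hx Hy Hxy) as [c [Kcc [A B]]].
      right; right; left. apply (H3 c); try apply Kcc; auto; [|apply Hx].
      apply H2; auto; apply Kcc.
    + destruct (L21 _ _ Hx Hy Hxy) as [c [Kcc [A B]]].
      right; right; right. apply (H4 c); try apply Kcc; auto; [|apply Hx].
      apply H1; auto; apply Kcc.
    + right; left; apply H2; auto; [apply Hx| apply L22; auto].
Qed.

Lemma at_loc_cases c l m : at_loc F c l -> at_loc F c m ->
  l = m \/ endpoints F c = Some (l, m) \/ endpoints F c = Some (m, l).
Proof.
  unfold at_loc, sender_of, recipient_of.
  intros [[r H]|[s H]] [[r' H']|[s' H']]; rewrite H in H'; injection H'; intros; subst; auto.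
Qed.

Lemma side12 c : side1 c -> side2 c -> Ccut c.
Proof. unfold side1, side2; tauto. Qed.

Lemma loc1 l c : Lo l -> at_loc F c l -> side1 c.
Proof.
  intros HL Ha. destruct (classic (Ccut c)) as [H|H]; [left; auto|].
  right; split; auto; right; exists l; auto.
Qed.

Lemma loc2 l c : ~ Lo l -> at_loc F c l -> side2 c.
Proof.
  intros HL Ha. destruct (classic (Ccut c)) as [H|H]; [left; auto|].
  right; split; [auto|split].
  - intros Hc; apply HL; exists c, l, []; split; [auto|split; [auto|split; [constructor|simpl; tauto]]].
  - intros [m [Hm Lm]].
    destruct (at_loc_cases c m l Hm Ha) as [<-|He]; [tauto|].
    apply HL. destruct Lm as [co [l0 [p [Hco [Hat [Hp Hnc]]]]]].
    exists co, l0, (p ++ [c]); split; [auto|split; [auto|split]].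
    + apply upath_snoc with m; tauto.
    + intros c' Hc'; apply in_app_or in Hc'; destruct Hc' as [Hc'|[<-|[]]]; auto.
Qed.

Lemma glue_exec : is_exec Aglue.
Proof.
  split; [apply glue_system|]. intros l.
  destruct (classic (Lo l)) as [HL|HL].
  - assert (Hiff : forall e, loc_ev Aglue l e <-> loc_ev A1 l e).
    { intros e; unfold loc_ev; simpl; split.
      - intros [[H|H] Ha]; split; auto; [apply H|].
        apply Kmem; [apply side12; [eapply loc1; eauto|apply H]|apply H].
      - intros [H Ha]; split; auto; left; split; auto; eapply loc1; eauto. }
    assert (HS : forall e, loc_ev A1 l e -> S1 e).
    { intros e [H Ha]; split; auto; eapply loc1; eauto. }
    destruct (proj2 ex1 l) as [lin [f [t [Hs [Hf [Hex [Hinc [Htr Heq]]]]]]]].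
    split.
    + intros e1 e2 H1 H2. apply Hiff in H1; apply Hiff in H2.
      destruct (lin e1 e2 H1 H2); [left|right]; simpl; left; sp; auto.
    + exists f, t; sp; auto;
      try (intros n e Hn; apply Hiff; eauto; fail);
      try (intros e He; apply Hex, Hiff; auto; fail).
      intros i j e1 e2 Hij H1 H2. destruct (Hinc i j e1 e2 Hij H1 H2); split; auto.
      simpl; left; sp; eauto.
  - assert (Hiff : forall e, loc_ev Aglue l e <-> loc_ev A2 l e).
    { intros e; unfold loc_ev; simpl; split.
      - intros [[H|H] Ha]; split; auto; [|apply H].
        apply Kmem; [apply side12; [apply H|eapply loc2; eauto]|apply H].
      - intros [H Ha]; split; auto; right; split; auto; eapply loc2; eauto. }
    assert (HS : forall e, loc_ev A2 l e -> S2 e).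
    { intros e [H Ha]; split; auto; eapply loc2; eauto. }
    destruct (proj2 ex2 l) as [lin [f [t [Hs [Hf [Hex [Hinc [Htr Heq]]]]]]]].
    split.
    + intros e1 e2 H1 H2. apply Hiff in H1; apply Hiff in H2.
      destruct (lin e1 e2 H1 H2); [left|right]; simpl; right; left; sp; auto.
    + exists f, t; sp; auto;
      try (intros n e Hn; apply Hiff; eauto; fail);
      try (intros e He; apply Hex, Hiff; auto; fail).
      intros i j e1 e2 Hij H1 H2. destruct (Hinc i j e1 e2 Hij H1 H2); split; auto.
      simpl; right; left; sp; eauto.
Qed.

Lemma Co_side c : Co c -> side1 c /\ ~ side2 c.
Proof.
  destruct cut as [_ [_ [d3 _]]]. intros H; unfold side1, side2; split.
  - right; split; auto; intros H'; apply (d3 c); auto.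
  - intros [H'|[_ [H' _]]]; [apply (d3 c)|]; auto.
Qed.

Lemma Cs_side c : Cs c -> side2 c /\ ~ side1 c.
Proof.
  destruct cut as [d1 [d2 [_ P]]]. intros H.
  assert (nC : ~ Ccut c) by (intros H'; apply (d1 c); auto).
  assert (nO : ~ Co c) by (intros H'; apply (d2 c); auto).
  assert (nT : ~ touches c).
  { intros [l [Hl [co [l0 [p [Hco [Hat [Hp Hnc]]]]]]]].
    destruct (P co c l0 l p Hco H Hat Hl Hp) as [c' [Hin Hc']]. apply (Hnc c'); auto. }
  unfold side1, side2; split; [right; auto|tauto].
Qed.

Lemma restrict_Co : sys_eq (restrict Co Aglue) (restrict Co A1).
Proof.
  assert (Hm : forall e, (S1 e \/ S2 e) /\ Co (chan F e) <-> mem A1 e /\ Co (chan F e)).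
  { intros e; split.
    - intros [[H|H] Hc]; [split; auto; apply H|].
      exfalso; apply (proj2 (Co_side _ Hc)); apply H.
    - intros [H Hc]; split; auto; left; split; auto; apply Co_side; auto. }
  split; [exact Hm|].
  intros e1 e2 M1 M2. simpl in *.
  assert (S1 e1) by (split; [apply Co_side; apply M1|apply Hm; auto]).
  assert (S1 e2) by (split; [apply Co_side; apply M2|apply Hm; auto]).
  split.
  - intros [_ [_ Hle]]; split; [apply Hm; auto|split; [apply Hm; auto|]]. apply L11; auto.
  - intros [_ [_ Hle]]; split; auto; split; auto. left; sp; auto.
Qed.

Lemma restrict_Cs : sys_eq (restrict Cs Aglue) (restrict Cs A2).
Proof.
  assert (Hm : forall e, (S1 e \/ S2 e) /\ Cs (chan F e) <-> mem A2 e /\ Cs (chan F e)).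
  { intros e; split.
    - intros [[H|H] Hc]; [|split; auto; apply H].
      exfalso; apply (proj2 (Cs_side _ Hc)); apply H.
    - intros [H Hc]; split; auto; right; split; auto; apply Cs_side; auto. }
  split; [exact Hm|].
  intros e1 e2 M1 M2. simpl in *.
  assert (S2 e1) by (split; [apply Cs_side; apply M1|apply Hm; auto]).
  assert (S2 e2) by (split; [apply Cs_side; apply M2|apply Hm; auto]).
  split.
  - intros [_ [_ Hle]]; split; [apply Hm; auto|split; [apply Hm; auto|]]. apply L22; auto.
  - intros [_ [_ Hle]]; split; auto; split; auto. right; left; sp; auto.
Qed.

End Glue.

Theorem lemma5 (F : frame) (Cs Ccut Co : CH F -> Prop) (Bo : sysev F) :
  undirected_cut F Cs Ccut Co ->
  lruns F Co Bo ->
  forall X : sysev F,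
    J F Co Cs Bo X <-> exists Bc : sysev F, J F Co Ccut Bo Bc /\ J F Ccut Cs Bc X.
Proof.
  intros cut _ X; split.
  - intros [A [HA [H1 H2]]]. exists (restrict Ccut A); split.
    + exists A; split; [|split]; auto; apply sys_eq_refl.
    + exists A; split; [|split]; auto; apply sys_eq_refl.
  - intros [Bc [[A1 [ex1 [h1 h2]]] [A2 [ex2 [h3 h4]]]]].
    assert (h : sys_eq (restrict Ccut A1) (restrict Ccut A2))
      by (eapply sys_eq_trans; [exact h2|apply sys_eq_sym; exact h3]).
    destruct h as [hm hl].
    assert (Kmem : forall e, Ccut (chan F e) -> (mem A1 e <-> mem A2 e)).
    { intros e He; specialize (hm e); simpl in hm; tauto. }
    assert (Kle : forall e1 e2, Ccut (chan F e1) -> Ccut (chan F e2) ->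
       mem A1 e1 -> mem A1 e2 -> (le A1 e1 e2 <-> le A2 e1 e2)).
    { intros e1 e2 c1 c2 m1 m2. assert (m1' := proj1 (Kmem e1 c1) m1).
      assert (m2' := proj1 (Kmem e2 c2) m2).
      specialize (hl e1 e2 (conj m1 c1) (conj m2 c2)); simpl in hl; tauto. }
    exists (Aglue F Ccut Co A1 A2); split; [|split].
    + eapply glue_exec; eauto.
    + eapply sys_eq_trans; [eapply restrict_Co; eauto|exact h1].
    + eapply sys_eq_trans; [eapply restrict_Cs; eauto|exact h4].
Qed.
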